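(* Let $A$ be a central simple algebra of degree $n$ over a field $k$, let $r>1$ and $1\leqslant i_1<\cdots<i_r\leqslant n$ be integers, and let $I_1\subset A$ be a left ideal of $k$-dimension $ni_1$. Let $B=I_1^\circ/I_1^\circ I_1$ (a $k$-algebra). Then the map $$(I_2,\ldots,I_r)\mapsto\bigl(I_1^\circ I_2/I_1^\circ I_1,\ldots,I_1^\circ I_r/I_1^\circ I_1\bigr)$$ is a canonical bijection from the set of tuples of left ideals $I_1\subset I_2\subset\cdots\subset I_r\subset A$ with $\dim_k I_j=ni_j$ onto the set of tuples $J_2\subset\cdots\subset J_r$ of left ideals of $B$ with $\dim_k J_j=(n-i_1)(i_j-i_1)$.
   Context: $I^\circ=\{a\in A: Ia=0\}$ is the right annihilator; $UW$ denotes the $k$-span of products $uw$. $I_1^\circ I_1$ is a two-sided ideal of the (non-unital) ring $I_1^\circ$, so $I_1^\circ/I_1^\circ I_1$ is a ring; it is a central simple $k$-algebra of degree $n-i_1$. *)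

(* Defs.v *)
From HB Require Import structures.
From mathcomp Require Import all_boot all_order all_algebra all_field.
Set Implicit Arguments. Unset Strict Implicit. Unset Printing Implicit Defensive.
Import GRing.Theory.
Local Open Scope ring_scope.
Local Open Scope vspace_scope.

Section Defs.
Variables (k : fieldType) (A : falgType k).

Definition central_simple : Prop :=
  'Z({:A}) = 1%VS /\
  forall U : {vspace A}, ({:A} * U <= U)%VS -> (U * {:A} <= U)%VS ->
    U = 0%VS \/ U = {:A}%VS.

Definition left_ideal (I : {vspace A}) : bool := ({:A} * I <= I)%VS.

(* right annihilator I° = {a | I a = 0} = intersection of kernels of b |-> u*b, u in a basis of I *)
Definition rann (I : {vspace A}) : {vspace A} :=
  (\bigcap_(t < \dim I) lker (amull (tnth (vbasis I) t)))%VS.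

(* tuples (I_2,...,I_r) (as a seq of size r-1) of left ideals with
   I1 <= I_2 <= ... <= I_r and dim I_j = n * i_j *)
Definition ideal_flag (n r : nat) (i : nat -> nat) (I1 : {vspace A})
    (s : seq {vspace A}) : Prop :=
  [/\ size s = r.-1,
      path (fun U V : {vspace A} => (U <= V)%VS) I1 s,
      all left_ideal s &
      forall t, (t < r.-1)%N -> \dim (nth 0%VS s t) = (n * i t.+2)%N].

(* Left ideals of B = I1°/I1°I1 are represented by their preimages in I1°:
   subspaces J with I1°I1 <= J <= I1° and I1° J <= J; dim_k (J/I1°I1) = dim J - dim I1°I1. *)
Definition quot_flag (n r : nat) (i : nat -> nat) (I1 : {vspace A})
    (s : seq {vspace A}) : Prop :=
  [/\ size s = r.-1,
      path (fun U V : {vspace A} => (U <= V)%VS) (rann I1 * I1)%VS s,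
      all (fun J => (J <= rann I1)%VS && (rann I1 * J <= J)%VS) s &
      forall t, (t < r.-1)%N ->
        \dim (nth 0%VS s t) = (\dim (rann I1 * I1) + (n - i 1) * (i t.+2 - i 1))%N].

Definition flag_map (I1 : {vspace A}) (s : seq {vspace A}) : seq {vspace A} :=
  map (fun I => (rann I1 * I)%VS) s.

End Defs.

(* Main.v *)
Require Import Defs.
From HB Require Import structures.
From mathcomp Require Import all_boot all_order all_algebra all_field.
From mathcomp Require Import zify.
From Stdlib Require Import Classical.
Import GRing.Theory.
Local Open Scope ring_scope.
Set Implicit Arguments. Unset Strict Implicit.



Section Aux.
Variables (k : fieldType) (A : falgType k).
Implicit Types (U V W L : {vspace A}) (x y u v a : A).

Lemma amullE u v : amull u v = u * v. Proof. by rewrite lfunE. Qed.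
Lemma amulrE u v : amulr u v = v * u. Proof. by rewrite lfunE. Qed.

Lemma rannP (I : {vspace A}) x : reflect (forall u, u \in I -> u * x = 0) (x \in rann I).
Proof.
apply: (iffP idP) => [hx u uI | h].
  have hx' : forall t : 'I_(\dim I), tnth (vbasis I) t * x = 0.
    move=> t; move: hx; rewrite /rann memvE => /subv_bigcapP/(_ t isT).
    by rewrite -memvE memv_ker amullE => /eqP.
  rewrite (coord_vbasis uI) mulr_suml big1 // => t _.
  by rewrite -scalerAl -(tnth_nth 0) hx' scaler0.
rewrite /rann memvE; apply/subv_bigcapP => t _; rewrite -memvE memv_ker amullE.
by rewrite h // vbasis_mem // mem_tnth.
Qed.

Lemma lidP L : left_ideal L -> forall a x, x \in L -> a * x \in L.
Proof. by move=> hL a x xL; apply: (subvP hL); rewrite memv_mul ?memvf. Qed.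

Lemma lidPn L : (forall a x, x \in L -> a * x \in L) -> left_ideal L.
Proof. by move=> h; apply/prodvP => a x _ xL; apply: h. Qed.
End Aux.


Section Simple.
Variables (k : fieldType) (A : falgType k).
Implicit Types (S T U V W L C : {vspace A}) (x y u v a b : A).

Definition minimal S := [/\ left_ideal S, S != 0%VS &
  forall T, left_ideal T -> (T <= S)%VS -> T = 0%VS \/ T = S].

Lemma lid_amulr L a : left_ideal L -> left_ideal (amulr a @: L)%VS.
Proof.
move=> hL; apply: lidPn => b y /memv_imgP[x xL ->].
by rewrite amulrE mulrA -amulrE memv_img // lidP.
Qed.

Lemma lid_cap L1 L2 : left_ideal L1 -> left_ideal L2 -> left_ideal (L1 :&: L2)%VS.
Proof.
move=> h1 h2; apply: lidPn => b y; rewrite !memv_cap => /andP[y1 y2].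
by rewrite !lidP.
Qed.

Lemma lid_add L1 L2 : left_ideal L1 -> left_ideal L2 -> left_ideal (L1 + L2)%VS.
Proof.
move=> h1 h2; apply: lidPn => b y /memv_addP[y1 y1L [y2 y2L ->]].
by rewrite mulrDr memv_add // lidP.
Qed.

Lemma lid_full : left_ideal (fullv : {vspace A}).
Proof. exact: subvf. Qed.

Lemma lid0 : left_ideal (0%VS : {vspace A}).
Proof. by apply: lidPn => b y; rewrite memv0 => /eqP->; rewrite mulr0 mem0v. Qed.

Lemma lid_ker L a : left_ideal L -> left_ideal (L :&: lker (amulr a))%VS.
Proof.
move=> hL; apply: lidPn => b y; rewrite !memv_cap !memv_ker !amulrE.
by case/andP=> yL /eqP ya; rewrite lidP //= -mulrA ya mulr0.
Qed.

Lemma lid_preim L T a : left_ideal L -> left_ideal T ->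
  left_ideal (L :&: (amulr a @^-1: T))%VS.
Proof.
move=> hL hT; apply: lidPn => b y; rewrite !memv_cap -!memv_preim !amulrE.
by case/andP=> yL ya; rewrite lidP //= -mulrA lidP.
Qed.

Lemma minimal_amulr S a : minimal S ->
  (amulr a @: S = 0)%VS \/
  ((S :&: lker (amulr a) = 0)%VS /\ minimal (amulr a @: S)%VS).
Proof.
case=> hS nzS minS.
case: (minS _ (@lid_ker S a hS) (capvSl _ _)) => [K0|KS]; [right|left].
  split=> //; split; first exact: lid_amulr.
    by rewrite -dimv_eq0 limg_dim_eq // dimv_eq0.
  move=> T hT sT.
  case: (minS _ (@lid_preim S T a hS hT) (capvSl _ _)) => [P0|PS]; [left|right].
    apply/eqP; rewrite -subv0; apply/subvP => y yT.
    have /memv_imgP[x xS yx] := subvP sT _ yT.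
    have : x \in (S :&: (amulr a @^-1: T))%VS by rewrite memv_cap xS -memv_preim -yx.
    by rewrite P0 memv0 => /eqP x0; rewrite yx x0 linear0 mem0v.
  apply: subv_anti; rewrite sT /=; apply/subvP => y /memv_imgP[x xS ->].
  by move: xS; rewrite -PS memv_cap -memv_preim => /andP[].
apply/eqP; rewrite -subv0; apply/subvP => y /memv_imgP[x xS ->].
by move: xS; rewrite -KS memv_cap memv_ker => /andP[_ /eqP->]; rewrite mem0v.
Qed.

End Simple.


Section Simple2.
Variables (k : fieldType) (A : falgType k).
Implicit Types (S T U V W L C : {vspace A}) (x y u v a b : A).
Hypothesis simpleA : forall U : {vspace A}, (fullv * U <= U)%VS ->
   (U * fullv <= U)%VS -> U = 0%VS \/ U = fullv.

Lemma fullv_neq0 : (fullv : {vspace A}) != 0%VS.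
Proof. by rewrite -dimv_eq0 dimvf -lt0n; exact: FalgType_proper. Qed.

Lemma exists_minimal L : left_ideal L -> L != 0%VS ->
  exists S, minimal S /\ (S <= L)%VS.
Proof.
elim: {L}(\dim L) {-2}L (leqnn (\dim L)) => [|m IH] L hm hL nzL.
  by move: nzL; rewrite -dimv_eq0; move: hm; rewrite leqn0 => ->.
case: (classic (forall T, left_ideal T -> (T <= L)%VS -> T = 0%VS \/ T = L)) => [h|].
  by exists L; split.
move/not_all_ex_not=> [T /not_all_ex_not [hT /not_all_ex_not [sTL /not_or_and [T0 TL]]]].
have [S [mS sST]] : exists S, minimal S /\ (S <= T)%VS.
  apply: IH => //; last by apply/eqP.
  have := dimv_leqif_eq sTL; case=> le eq.
  have : \dim T != \dim L by rewrite eq; apply/eqP.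
  by move: hm; lia.
by exists S; split=> //; apply: subv_trans sTL.
Qed.

Lemma minimal_full S : minimal S -> (S * fullv)%VS = fullv.
Proof.
case=> hS nzS _.
case: (simpleA (U := (S * fullv)%VS)) => [||h|//].
- by rewrite prodvA prodvSl.
- by rewrite -prodvA prodvSr ?subvf.
move: nzS; have : (S <= S * fullv)%VS.
  by rewrite -{1}(prodv1 S) prodvSr ?subvf.
by rewrite h subv0 => ->.
Qed.

Lemma not_sub_amulr S W : (S * fullv)%VS = fullv -> W != fullv ->
  exists a, ~~ (amulr a @: S <= W)%VS.
Proof.
move=> hS nW; apply: NNPP => h.
have h' : forall a, (amulr a @: S <= W)%VS.
  by move=> a; apply: negbNE; apply/negP => na; apply: h; exists a.
move/negP: nW; apply; rewrite eqEsubv subvf -hS /=.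
apply/prodvP => u w uS _; rewrite -amulrE; apply: (subvP (h' w)).
exact: memv_img.
Qed.

Lemma complement L : left_ideal L ->
  exists C, [/\ left_ideal C, (L :&: C = 0)%VS & (L + C = fullv)%VS].
Proof.
move=> hL.
have [S0 [mS0 _]] := exists_minimal (@lid_full _ A) fullv_neq0.
have hS0 := minimal_full mS0.
suff: forall m C, left_ideal C -> (L :&: C = 0)%VS ->
    (\dim (fullv : {vspace A}) - \dim (L + C) <= m)%N ->
    exists C', [/\ left_ideal C', (L :&: C' = 0)%VS & (L + C' = fullv)%VS].
  move=> /(_ _ 0%VS (@lid0 _ A) (capv0 _) (leqnn _)); exact.
elim=> [|m IH] C hC dC hm.
  exists C; split=> //; apply/eqP; rewrite eqEsubv subvf /=.
  have := dimv_leqif_sup (subvf (L + C)%VS); case=> le eq.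
  rewrite -eq; move: hm; rewrite leqn0 subn_eq0 => h.
  by rewrite eqn_leq h le.
have [LC|nLC] := eqVneq (L + C)%VS fullv; first by exists C.
have [a na] := not_sub_amulr hS0 nLC.
case: (minimal_amulr a mS0) => [T0|[injT mT]].
  by move: na; rewrite T0 sub0v.
set T := (amulr a @: S0)%VS in na mT injT.
case: (mT) => hT nzT minT.
have TI : (T :&: (L + C) = 0)%VS.
  case: (minT _ (lid_cap hT (lid_add hL hC)) (capvSl _ _)) => // h.
  by move: na; rewrite -h capvSr.
apply: (IH (C + T)%VS); first exact: lid_add.
  apply/eqP; rewrite -subv0; apply/subvP => x; rewrite memv_cap => /andP[xL].
  case/memv_addP => c cC [t tT xe].
  have tLC : t \in (L + C)%VS.
    have -> : t = x + (- c) by rewrite xe addrC addKr.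
    by rewrite memv_add // memvN.
  have : t \in (T :&: (L + C))%VS by rewrite memv_cap tT.
  rewrite TI memv0 => /eqP t0; move: xe; rewrite t0 addr0 => xc.
  by rewrite -dC memv_cap xL xc cC.
rewrite addvA dimv_disjoint_sum; last by rewrite capvC.
have : (0 < \dim T)%N by rewrite lt0n dimv_eq0.
have := dimv_leqif_sup (subvf (L + C)%VS); case=> le eq.
have : \dim (L + C)%VS != \dim (fullv : {vspace A}) by rewrite eq; apply: contra nLC => h; rewrite eqEsubv subvf h.
have := dimvS (subvf (L + C + T)%VS).
rewrite dimv_disjoint_sum; last by rewrite capvC.
by move: hm; lia.
Qed.

End Simple2.


Section Simple3.
Variables (k : fieldType) (A : falgType k).
Implicit Types (S T U V W L C : {vspace A}) (x y u v a b e g h : A).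
Hypothesis simpleA : forall U : {vspace A}, (fullv * U <= U)%VS ->
   (U * fullv <= U)%VS -> U = 0%VS \/ U = fullv.

Lemma split_idem T C e1 e2 : left_ideal T -> left_ideal C -> (T :&: C = 0)%VS ->
  e1 \in T -> e2 \in C -> forall x, x \in T -> x = x * (e1 + e2) ->
  x * e1 = x /\ x * e2 = 0.
Proof.
move=> hT hC TC e1T e2C x xT xe.
have h2 : x * e2 = x - x * e1 by rewrite {2}xe mulrDr addrAC subrr add0r.
have : x * e2 \in (T :&: C)%VS by rewrite memv_cap (lidP hC x e2C) h2 memvB // (lidP hT x e1T).
rewrite TC memv0 => /eqP z; split=> //; apply/eqP; rewrite -subr_eq0.
by rewrite -opprB oppr_eq0 -h2 z.
Qed.

Lemma idem_gen L : left_ideal L ->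
  exists e, [/\ e * e = e, e \in L & forall x, (x \in L) = (x * e == x)].
Proof.
move=> hL; have [C [hC LC LCf]] := complement simpleA hL.
have : (1 : A) \in (L + C)%VS by rewrite LCf memvf.
case/memv_addP => e eL [c cC e1].
have key : forall x, x \in L -> x * e = x.
  move=> x xL; have [] := split_idem hL hC LC eL cC xL; first by rewrite -e1 mulr1.
  by [].
exists e; split; [exact: key | exact: eL|] => x.
apply/idP/eqP; first exact: key.
by move=> <-; rewrite lidP.
Qed.

Lemma relcomp T L : left_ideal T -> left_ideal L -> (T <= L)%VS ->
  exists C, [/\ left_ideal C, (T :&: C = 0)%VS & (T + C = L)%VS].
Proof.
move=> hT hL sTL; have [C [hC TC TCf]] := complement simpleA hT.
exists (C :&: L)%VS; split; first exact: lid_cap.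
  by rewrite capvA TC cap0v.
apply: subv_anti; rewrite subv_add sTL capvSr /=.
apply/subvP => x xL; have : x \in (T + C)%VS by rewrite TCf memvf.
case/memv_addP => t tT [c cC xe]; rewrite xe memv_add // memv_cap cC /=.
have -> : c = (t + c) - t by rewrite addrC addKr.
by rewrite -xe memvB // (subvP sTL).
Qed.

Lemma dim_le_inj U W (f : 'End(A)) : (U :&: lker f = 0)%VS -> (f @: U <= W)%VS ->
  (\dim U <= \dim W)%N.
Proof. by move=> inj sub; rewrite -(limg_dim_eq inj) dimvS. Qed.

Variable S0 : {vspace A}.
Hypothesis mS0 : minimal S0.

Lemma contains_copy L : left_ideal L -> L != 0%VS ->
  exists a, [/\ (S0 :&: lker (amulr a) = 0)%VS, minimal (amulr a @: S0)%VS &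
               (amulr a @: S0 <= L)%VS].
Proof.
move=> hL nzL; have hS0 := minimal_full simpleA mS0.
case: mS0 => hS nzS _.
set x := vpick L.
have xL : x \in L := memv_pick L.
have nx : x != 0 by rewrite vpick0.
have [b nb] : exists b, (amulr (b * x) @: S0)%VS != 0%VS.
  apply: NNPP => h; move/negP: nx; apply.
  have h' : forall b, (amulr (b * x) @: S0)%VS = 0%VS.
    by move=> b; apply/eqP; apply: negbNE; apply/negP => nb; apply: h; exists b.
  have : (S0 * fullv <= lker (amulr x))%VS.
    apply/prodvP => u w uS _; rewrite memv_ker amulrE -mulrA.
    have : amulr (w * x) u \in (amulr (w * x) @: S0)%VS by rewrite memv_img.
    by rewrite h' memv0 amulrE.
  by rewrite hS0 => /subvP/(_ 1 (memvf _)); rewrite memv_ker amulrE mul1r.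
case: (minimal_amulr (b * x) mS0) => [T0|[inj mT]]; first by rewrite T0 eqxx in nb.
exists (b * x); split=> //; apply/subvP => y /memv_imgP[u uS ->].
by rewrite amulrE mulrA lidP.
Qed.

Lemma amull_sub L g : left_ideal L -> (amull g @: L <= L)%VS.
Proof. by move=> hL; apply/subvP => y /memv_imgP[x xL ->]; rewrite amullE lidP. Qed.

Lemma proportional g L : left_ideal L ->
  (\dim (amull g @: L) * \dim S0 = \dim L * \dim (amull g @: S0))%N.
Proof.
elim: {L}(\dim L) {-2}L (leqnn (\dim L)) => [|m IH] L hm hL.
  by move: hm; rewrite leqn0 dimv_eq0 => /eqP->; rewrite limg0 dimv0.
have [L0|nzL] := eqVneq L 0%VS; first by rewrite L0 limg0 !dimv0.
have [a [inj [hT nzT _] sTL]] := contains_copy hL nzL.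
set T := (amulr a @: S0)%VS in inj hT nzT sTL.
have [C [hC TC TCL]] := relcomp hT hL sTL.
have dT : \dim T = \dim S0 by rewrite limg_dim_eq.
have dL : \dim L = (\dim T + \dim C)%N by rewrite -TCL dimv_disjoint_sum.
have hS := minimal_full simpleA mS0; case: mS0 => hS0 _ _.
have gT : (amull g @: T)%VS = (amulr a @: (amull g @: S0))%VS.
  apply: subv_anti; apply/andP; split; apply/subvP => y /memv_imgP[z zT ->].
    case/memv_imgP: zT => w wS ->; rewrite amulrE amullE mulrA.
    have -> : g * w * a = amulr a (amull g w) by rewrite amulrE amullE.
    by rewrite memv_img // memv_img.
  case/memv_imgP: zT => w wS ->; rewrite amulrE amullE -mulrA.
  have -> : g * (w * a) = amull g (amulr a w) by rewrite amulrE amullE.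
  by rewrite memv_img // memv_img.
have dgT : \dim (amull g @: T) = \dim (amull g @: S0).
  rewrite gT limg_dim_eq //; apply/eqP; rewrite -subv0 -inj.
  by apply: capvS => //; apply: amull_sub.
have dgL : \dim (amull g @: L) = (\dim (amull g @: T) + \dim (amull g @: C))%N.
  rewrite -TCL limgD dimv_disjoint_sum //; apply/eqP; rewrite -subv0 -TC.
  by apply: capvS; apply: amull_sub.
have IHC := IH C _ hC.
have dTpos : (0 < \dim T)%N by rewrite lt0n dimv_eq0.
have IHC' := IHC ltac:(move: hm; rewrite dL; lia).
rewrite dgL dgT dL dT mulnDl IHC'; nia.
Qed.

End Simple3.


Section Simple4.
Variables (k : fieldType) (A : falgType k).
Implicit Types (S T U V W L C : {vspace A}) (x y u v a b e g h : A).
Hypothesis simpleA : forall U : {vspace A}, (fullv * U <= U)%VS ->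
   (U * fullv <= U)%VS -> U = 0%VS \/ U = fullv.

Lemma memAe e x : e * e = e -> (x \in (amulr e @: fullv)%VS) = (x * e == x).
Proof.
move=> ee; apply/memv_imgP/eqP => [[y _ ->]|xe]; first by rewrite !amulrE -mulrA ee.
by exists x; rewrite ?memvf // amulrE xe.
Qed.

Variable S0 : {vspace A}.
Hypothesis mS0 : minimal S0.
Variable h : A.
Hypothesis hh : h * h = h.
Hypothesis hS0 : forall x, (x \in S0) = (x * h == x).

Lemma hin : h \in S0. Proof. by rewrite hS0 hh. Qed.

Lemma equiv_dim a e1 : (S0 :&: lker (amulr a) = 0)%VS ->
  e1 \in (amulr a @: S0)%VS -> (forall x, x \in (amulr a @: S0)%VS -> x * e1 = x) ->
  \dim (amull e1 @: S0) = \dim (amull h @: S0).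
Proof.
move=> inj e1T e1id.
case: mS0 => lS0 _ _.
have e1e1 : e1 * e1 = e1 by rewrite e1id.
set v := h * a * e1.
have xv : forall x, x \in S0 -> x * v = x * a.
  move=> x xS; rewrite /v !mulrA.
  have -> : x * h = x by apply/eqP; rewrite -hS0.
  by rewrite e1id // -amulrE memv_img.
case/memv_imgP: e1T => u0 u0S; rewrite amulrE => e1u0.
set u := e1 * u0.
have uv : u * v = e1 by rewrite /u -mulrA xv // -e1u0 e1e1.
have hv : h * v = v by rewrite /v !mulrA hh.
have ve1 : v * e1 = v by rewrite /v -mulrA e1e1.
have vu : v * u = h.
  have vuS : v * u \in S0 by rewrite /u mulrA lidP.
  have : v * u - h \in (S0 :&: lker (amulr a))%VS.
    rewrite memv_cap memvB ?hin // memv_ker amulrE mulrBl -!xv ?memvB ?hin //.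
    by rewrite /= -(mulrA v u v) uv ve1 hv subrr.
  by rewrite inj memv0 subr_eq0 => /eqP.
apply/eqP; rewrite eqn_leq; apply/andP; split.
  apply: (@dim_le_inj _ _ _ _ (amull v)).
    apply/eqP; rewrite -subv0; apply/subvP => y; rewrite memv_cap memv_ker amullE.
    case/andP => /memv_imgP[z zS ->] /eqP; rewrite amullE => vz.
    have -> : e1 * z = u * (v * (e1 * z)) by rewrite mulrA uv mulrA e1e1.
    by rewrite vz mulr0 mem0v.
  apply/subvP => y /memv_imgP[z /memv_imgP[w wS ->] ->]; rewrite !amullE.
  have -> : v * (e1 * w) = amull h (a * (e1 * w)) by rewrite amullE /v mulrA -(mulrA _ e1 e1) e1e1 !mulrA.
  by rewrite memv_img // !lidP.
apply: (@dim_le_inj _ _ _ _ (amull u)).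
  apply/eqP; rewrite -subv0; apply/subvP => y; rewrite memv_cap memv_ker amullE.
  case/andP => /memv_imgP[z zS ->] /eqP; rewrite amullE => uz.
  have -> : h * z = v * (u * (h * z)) by rewrite mulrA vu mulrA hh.
  by rewrite uz mulr0 mem0v.
apply/subvP => y /memv_imgP[z /memv_imgP[w wS ->] ->]; rewrite !amullE.
have -> : u * (h * w) = amull e1 (u0 * (h * w)) by rewrite amullE /u -mulrA.
by rewrite memv_img // !lidP.
Qed.

Lemma Qlemma e : e * e = e ->
  (\dim (amull e @: S0) * \dim S0 =
   \dim (amulr e @: fullv) * \dim (amull h @: S0))%N.
Proof.
move: e => e0 ee0; suff: forall m e, (\dim (amulr e @: fullv) <= m)%N -> e * e = e ->
  (\dim (amull e @: S0) * \dim S0 =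
   \dim (amulr e @: fullv) * \dim (amull h @: S0))%N by apply; [exact: leqnn|].
elim=> [|m IH] e hm ee.
  move: hm; rewrite leqn0 dimv_eq0 => /eqP L0.
  have : e \in (amulr e @: fullv)%VS by rewrite memAe ?ee.
  by rewrite L0 memv0 => /eqP->; rewrite dimv0 linear0 lim0g dimv0.
have lS0 : left_ideal S0 by case: mS0.
set L := (amulr e @: fullv)%VS.
have hL : left_ideal L by apply: lid_amulr; apply: subvf.
have [L0|nzL] := eqVneq L 0%VS.
  have : e \in L by rewrite memAe ?ee.
  by rewrite L0 memv0 => /eqP->; rewrite dimv0 linear0 lim0g dimv0.
have [a [inj mT sTL]] := contains_copy simpleA mS0 hL nzL.
case: (mT) => hT nzT _.
set T := (amulr a @: S0)%VS in inj mT sTL hT nzT.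
have [C [hC TC TCL]] := relcomp simpleA hT hL sTL.
have : e \in (T + C)%VS by rewrite TCL memAe ?ee.
case/memv_addP => e1 e1T [e2 e2C ee12].
have xL : forall x, x \in L -> x = x * (e1 + e2).
  by move=> x; rewrite memAe // -ee12 => /eqP->.
have sT : forall x, x \in T -> x * e1 = x /\ x * e2 = 0.
  move=> x xT; apply: (split_idem hT hC TC e1T e2C xT); apply: xL.
  exact: (subvP sTL).
have sC : forall x, x \in C -> x * e2 = x /\ x * e1 = 0.
  move=> x xC; rewrite capvC in TC.
  apply: (split_idem hC hT TC e2C e1T xC); rewrite addrC; apply: xL.
  by rewrite -TCL; apply: (subvP (addvSr T C)).
have [e1e1 e1e2] := sT _ e1T.
have [e2e2 e2e1] := sC _ e2C.
have C_Ae2 : C = (amulr e2 @: fullv)%VS.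
  apply/vspaceP => x; rewrite memAe //; apply/idP/eqP.
    by case/sC.
  by move=> <-; rewrite lidP.
have dT : \dim T = \dim S0 by rewrite limg_dim_eq.
have dL : \dim L = (\dim T + \dim C)%N by rewrite -TCL dimv_disjoint_sum.
have eS : (amull e @: S0)%VS = (amull e1 @: S0 + amull e2 @: S0)%VS.
  apply: subv_anti; apply/andP; split; apply/subvP => y.
    case/memv_imgP => z zS ->; rewrite amullE ee12 mulrDl -!amullE.
    by rewrite memv_add // memv_img.
  case/memv_addP => y1 /memv_imgP[z1 z1S ->] [y2 /memv_imgP[z2 z2S ->] ->].
  rewrite !amullE memvD //.
    have -> : e1 * z1 = amull e (e1 * z1) by rewrite amullE mulrA ee12 mulrDl e1e1 e2e1 addr0.
    by rewrite memv_img // (lidP lS0 _ z1S).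
  have -> : e2 * z2 = amull e (e2 * z2) by rewrite amullE mulrA ee12 mulrDl e2e2 e1e2 add0r.
  by rewrite memv_img // (lidP lS0 _ z2S).
have deS : \dim (amull e @: S0) = (\dim (amull e1 @: S0) + \dim (amull e2 @: S0))%N.
  rewrite eS dimv_disjoint_sum //; apply/eqP; rewrite -subv0; apply/subvP => y.
  rewrite memv_cap => /andP[/memv_imgP[z1 _ ->] /memv_imgP[z2 _]].
  rewrite !amullE => ez; have : e1 * (e1 * z1) = e1 * (e2 * z2) by rewrite ez.
  by rewrite mulrA e1e1 mulrA e1e2 mul0r => ->; rewrite mem0v.
have de1 : \dim (amull e1 @: S0) = \dim (amull h @: S0).
  by apply: (equiv_dim inj e1T) => x xT; case: (sT x xT).
have dTpos : (0 < \dim T)%N by rewrite lt0n dimv_eq0.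
have IHe2 := IH e2 ltac:(move: hm; rewrite -/L dL -C_Ae2; lia) e2e2.
rewrite deS de1 dL dT C_Ae2 mulnDl IHe2; nia.
Qed.

End Simple4.


Section Simple5.
Variables (k : fieldType) (A : falgType k).
Implicit Types (S T U V W L C : {vspace A}) (x y u v a b e g h : A).
Hypothesis simpleA : forall U : {vspace A}, (fullv * U <= U)%VS ->
   (U * fullv <= U)%VS -> U = 0%VS \/ U = fullv.

Lemma amulr1' : amulr (1 : A) = \1%VF.
Proof. by apply/lfunP => x; rewrite amulrE mulr1 id_lfunE. Qed.

Lemma dim_eA e : e * e = e ->
  \dim (amull e @: fullv) = \dim (amulr e @: fullv).
Proof.
move=> ee.
have [S0 [mS0 _]] := exists_minimal (@lid_full _ A) (fullv_neq0 A).
have lS0 : left_ideal S0 by case: mS0.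
have [h [hh hin hS0]] := idem_gen simpleA lS0.
have Q1 := Qlemma simpleA mS0 hh hS0 (mulr1 1).
rewrite amull1 lim1g amulr1' lim1g in Q1.
have P := proportional simpleA mS0 e (@lid_full _ A).
have Qe := Qlemma simpleA mS0 hh hS0 ee.
have spos : (0 < \dim S0)%N by rewrite lt0n dimv_eq0; case: mS0.
set P1 := \dim (amull e @: fullv) in P *.
set R1 := \dim (amulr e @: fullv) in Qe *.
set N := \dim (fullv : {vspace A}) in Q1 P.
set Q := \dim (amull e @: S0) in P Qe.
set d := \dim (amull h @: S0) in Q1 Qe.
set s := \dim S0 in Q1 P Qe spos.
have : (P1 * (s * s) = R1 * (s * s))%N.
  by rewrite mulnA P -mulnA Qe mulnCA -Q1.
by move/eqP; rewrite eqn_pmul2r ?muln_gt0 ?spos // => /eqP.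
Qed.

Lemma key_dim e n i1 L : e * e = e -> \dim (fullv : {vspace A}) = (n ^ 2)%N ->
  \dim (amulr e @: fullv) = (n * i1)%N -> left_ideal L ->
  (n * \dim (amull (1 - e) @: L) = (n - i1) * \dim L)%N.
Proof.
move=> ee hN hAe hL; set f := 1 - e.
have [S0 [mS0 _]] := exists_minimal (@lid_full _ A) (fullv_neq0 A).
have spos : (0 < \dim S0)%N by rewrite lt0n dimv_eq0; case: mS0.
have PL := proportional simpleA mS0 f hL.
have PA := proportional simpleA mS0 f (@lid_full _ A).
have ff : f * f = f by rewrite /f mulrBl mul1r mulrBr mulr1 ee subrr subr0.
have ef : e * f = 0 by rewrite /f mulrBr mulr1 ee subrr.
have fe : f * e = 0 by rewrite /f mulrBl mul1r ee subrr.
have sum : (\dim (amull e @: fullv) + \dim (amull f @: fullv))%N = (n ^ 2)%N.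
  rewrite -hN -dimv_disjoint_sum.
    congr (\dim _); apply/eqP; rewrite eqEsubv subvf /=.
    apply/subvP => x _; have -> : x = e * x + f * x by rewrite -mulrDl /f addrC subrK mul1r.
    by rewrite -!amullE memv_add // memv_img ?memvf.
  apply/eqP; rewrite -subv0; apply/subvP => y.
  rewrite memv_cap => /andP[/memv_imgP[z1 _ ->] /memv_imgP[z2 _]].
  rewrite !amullE => ez; have : e * (e * z1) = e * (f * z2) by rewrite ez.
  by rewrite mulrA ee mulrA ef mul0r => ->; rewrite mem0v.
rewrite dim_eA // hAe in sum.
have npos : (0 < n)%N.
  rewrite lt0n; apply/eqP => n0; move: (FalgType_proper A); by rewrite -dimvf hN n0.
set F := \dim (amull f @: fullv) in PA sum.
set FL := \dim (amull f @: L) in PL *.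
set s := \dim S0 in PL PA spos.
set D := \dim (amull f @: S0) in PL PA.
have hF : F = (n * (n - i1))%N.
  have n2 : (n ^ 2 = n * n)%N by rewrite expnS expn1.
  by rewrite mulnBr -n2 -sum addKn.
have : ((FL * (n * n)) * s = (\dim L * (n * (n - i1))) * s)%N.
  rewrite mulnAC PL -hF -(mulnA (\dim L) F s) PA hN expnS expn1; nia.
move/eqP; rewrite eqn_pmul2r // => /eqP.
move=> H; apply/eqP; rewrite -(eqn_pmul2l npos); apply/eqP; nia.
Qed.

End Simple5.

Unset Implicit Arguments. Set Strict Implicit.


Lemma ilow (r : nat) (i : nat -> nat)
    (hinc : forall j, (1 <= j < r)%N -> (i j < i j.+1)%N) :
  forall j, (1 <= j <= r)%N -> (i 1 + (j - 1) <= i j)%N.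
Proof.
elim=> [|j IH] //; case: j IH => [|j] IH; first by rewrite addn0.
move=> hj; have := hinc j.+1 ltac:(lia); have := IH ltac:(lia); lia.
Qed.

Local Open Scope vspace_scope.

Theorem mainTheorem7 (k : fieldType) (A : falgType k) (n : nat)
    (hA : central_simple A) (hdeg : \dim {:A} = (n ^ 2)%N)
    (r : nat) (hr : (1 < r)%N) (i : nat -> nat)
    (hi1 : (1 <= i 1)%N)
    (hinc : forall j, (1 <= j < r)%N -> (i j < i j.+1)%N)
    (hir : (i r <= n)%N)
    (I1 : {vspace A}) (hI1 : left_ideal I1) (hdimI1 : \dim I1 = (n * i 1)%N) :
  [/\ forall s, ideal_flag n r i I1 s -> quot_flag n r i I1 (flag_map I1 s),
      forall s s', ideal_flag n r i I1 s -> ideal_flag n r i I1 s' ->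
        flag_map I1 s = flag_map I1 s' -> s = s' &
      forall s', quot_flag n r i I1 s' ->
        exists2 s, ideal_flag n r i I1 s & flag_map I1 s = s'].
Proof.
Local Close Scope vspace_scope.
case: hA => _ simpleA.
have [e [ee eI1 hI1e]] := idem_gen simpleA hI1.
have I1E : I1 = (amulr e @: fullv)%VS.
  by apply/vspaceP => x; rewrite memAe // hI1e.
have hAe : \dim (amulr e @: fullv) = (n * i 1)%N by rewrite -I1E.
set f := 1 - e.
have ff : f * f = f by rewrite /f mulrBl mul1r mulrBr mulr1 ee subrr subr0.
have ef : e * f = 0 by rewrite /f mulrBr mulr1 ee subrr.
have fe : f * e = 0 by rewrite /f mulrBl mul1r ee subrr.
have i1n : (i 1 < n)%N.
  have := ilow r i hinc r ltac:(lia); lia.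
have ilowt : forall t, (t < r.-1)%N -> (i 1 <= i t.+2)%N.
  move=> t ht; have := ilow r i hinc t.+2 ltac:(lia); lia.
have npos : (0 < n)%N by lia.
have rannE : forall x, (x \in rann I1) = (f * x == x).
  move=> x; apply/rannP/eqP => [h|fx u uI1].
    by rewrite /f mulrBl mul1r h ?subr0.
  rewrite -fx mulrA; have -> : u * f = 0.
    by move: uI1; rewrite hI1e => /eqP ue; rewrite /f mulrBr mulr1 ue subrr.
  by rewrite mul0r.
have frann : f \in rann I1 by rewrite rannE ff.
have prodE : forall L, left_ideal L -> (rann I1 * L)%VS = (amull f @: L)%VS.
  move=> L hL; apply: subv_anti; apply/andP; split.
    apply/prodvP => u v; rewrite rannE => /eqP <- vL.
    by rewrite -mulrA -amullE memv_img // lidP.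
  by apply/subvP => y /memv_imgP[x xL ->]; rewrite amullE memv_mul.
have rr : (rann I1 * fullv <= rann I1)%VS.
  apply/prodvP => u v; rewrite !rannE => /eqP <- _.
  by rewrite !mulrA ff.
have dfI1 : \dim (rann I1 * I1) = ((n - i 1) * i 1)%N.
  have := key_dim simpleA ee hdeg hAe hI1; rewrite -prodE // hdimI1.
  move=> H; apply/eqP; rewrite -(eqn_pmul2l npos); apply/eqP; rewrite H; lia.
have dimL : forall L, left_ideal L -> (n * \dim (rann I1 * L) = (n - i 1) * \dim L)%N.
  by move=> L hL; rewrite prodE //; apply: key_dim.
have fullr : (fullv * rann I1)%VS = fullv.
  case: (simpleA (fullv * rann I1)%VS) => [||h|//].
  - by rewrite prodvA prodvSl ?subvf.
  - by rewrite -prodvA prodvSr.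
  have : f \in (fullv * rann I1)%VS by rewrite -[f]mul1r memv_mul ?memvf.
  rewrite h memv0 => /eqP f0.
  have e1 : e = 1 by apply/eqP; rewrite -subr_eq0 -opprB oppr_eq0 -/f f0.
  have : I1 = fullv by apply/vspaceP => x; rewrite hI1e e1 mulr1 eqxx memvf.
  by move=> I1f; move: hdimI1; rewrite I1f hdeg; nia.
have recover : forall L, left_ideal L -> (I1 <= L)%VS ->
    L = (I1 + fullv * (rann I1 * L))%VS.
  move=> L hL sIL; apply: subv_anti; apply/andP; split; last first.
    have sub1 : (rann I1 * L <= L)%VS by rewrite prodE //; exact: amull_sub.
    by rewrite subv_add sIL /=; exact: subv_trans (prodvSr _ sub1) hL.
  apply/subvP => x xL; have -> : x = x * e + x * f by rewrite -mulrDr /f addrC subrK mulr1.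
  apply: memv_add; first by rewrite hI1e -mulrA ee.
  have : x * f = 1 * (x * f) by rewrite mul1r.
  move=> ->; rewrite prodvA memv_mul ?fullr ?memvf //.
  have -> : x * f = x - x * e by rewrite /f mulrBr mulr1.
  by rewrite memvB // (subvP sIL) // hI1e -mulrA ee.
have pathmin : forall (x : {vspace A}) s, path (fun U V => (U <= V)%VS) x s ->
    forall y, y \in s -> (x <= y)%VS.
  move=> x s p y ys.
  have tr : transitive (fun U V : {vspace A} => (U <= V)%VS).
    by move=> V U W; exact: subv_trans.
  by have /allP := order_path_min tr p; apply.
split.
- move=> s [sz p al dm]; split.
  + by rewrite size_map.
  + rewrite /flag_map (path_map I1); apply: sub_path p => U V /=; exact: prodvSr.
  + rewrite /flag_map all_map; apply/allP => J Js /=; apply/andP; split.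
      exact: subv_trans (prodvSr _ (subvf _)) rr.
    rewrite prodvA; apply: prodvSl; exact: subv_trans (prodvSr _ (subvf _)) rr.
  + move=> t ht; rewrite /flag_map (nth_map 0%VS) ?sz //.
    set I := nth 0%VS s t.
    have hI : left_ideal I by apply: (allP al); rewrite mem_nth ?sz.
    have := dimL I hI; rewrite (dm t ht) => H.
    rewrite dfI1; have ilt := ilowt t ht.
    apply/eqP; rewrite -(eqn_pmul2l npos); apply/eqP; rewrite H; nia.
- move=> s s' [sz p al dm] [sz' p' al' dm'] hm.
  apply: (eq_from_nth (x0 := 0%VS)); first by rewrite sz sz'.
  move=> t ht.
  have ht' : (t < size s')%N by rewrite sz'; rewrite sz in ht.
  have hI : left_ideal (nth 0%VS s t) by apply: (allP al); rewrite mem_nth.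
  have hI' : left_ideal (nth 0%VS s' t) by apply: (allP al'); rewrite mem_nth.
  have sI := pathmin _ _ p _ (mem_nth 0%VS ht).
  have sI' := pathmin _ _ p' _ (mem_nth 0%VS ht').
  have := congr1 (fun l => nth 0%VS l t) hm; rewrite /flag_map /= !(nth_map 0%VS) // => e'.
  by rewrite (recover _ hI sI) (recover _ hI' sI') e'.
- move=> s' [sz p al dm].
  pose G := fun J : {vspace A} => (I1 + fullv * J)%VS.
  have Jprop : forall J, J \in s' ->
      [/\ (J <= rann I1)%VS, (rann I1 * J <= J)%VS & (rann I1 * I1 <= J)%VS].
    move=> J Js; have /andP[a b] := allP al J Js; split=> //.
    exact: pathmin _ _ p _ Js.
  have lidG : forall J, left_ideal (G J).
    move=> J; apply: lid_add hI1 _; rewrite /left_ideal prodvA; apply: prodvSl.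
    exact: subvf.
  have GJ : forall J, J \in s' -> (rann I1 * G J)%VS = J.
    move=> J Js; have [a b c] := Jprop J Js.
    apply: subv_anti; apply/andP; split.
      rewrite /G prodvDr subv_add c /= prodvA; apply: subv_trans b; exact: prodvSl rr.
    apply/subvP => j jJ.
    have fj : f * j = j by apply/eqP; rewrite -rannE (subvP a).
    have -> : j = f * (1 * j) by rewrite mul1r fj.
    rewrite memv_mul //; rewrite /G; apply: (subvP (addvSr _ _)).
    exact: memv_mul (memvf _) jJ.
  have GI1 : G (rann I1 * I1)%VS = I1.
    apply/eqP; rewrite eqEsubv addvSl andbT subv_add subvv /=.
    rewrite prodvA; exact: subv_trans (prodvSl _ (subvf _)) hI1.
  exists (map G s').
    split.
    + by rewrite size_map.
    + have : path (fun U V => (U <= V)%VS) (G (rann I1 * I1)%VS) (map G s').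
        rewrite path_map; apply: sub_path p => U V /= sUV; rewrite /G.
        by apply: addvS => //; exact: prodvSr.
      by rewrite GI1.
    + rewrite all_map; apply/allP => J _ /=; exact: lidG.
    + move=> t ht; rewrite (nth_map 0%VS) ?sz //.
      set J := nth 0%VS s' t.
      have Js : J \in s' by rewrite mem_nth ?sz.
      have := dimL _ (lidG J); rewrite GJ // (dm t ht) dfI1 => H.
      have ilt := ilowt t ht.
      have pos : (0 < n - i 1)%N by lia.
      apply/eqP; rewrite -(eqn_pmul2l pos); apply/eqP; rewrite -H; nia.
  rewrite /flag_map -map_comp -[RHS]map_id; apply/eq_in_map => J Js /=; exact: GJ.
Qed.
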